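(* Let $V$ be a $2$-dimensional real vector space. For every $T\in\widetilde C_1$, the isotropy subgroup $\{g\in\mathrm{Gl}(V): g\cdot T=T\}$ has dimension at least $1$. Equivalently, on a $2$-dimensional manifold every $1$-jet at $x$ of a symmetric linear connection has an isotropy group of dimension at least $1$ for the action of $\mathrm{Diff}_x$ on $\widetilde{\mathfrak{C}}^1_2\cong\widetilde C_1/\mathrm{Gl}_2$.
   Context: $\widetilde C_1$ is the space of $(1,3)$-tensors $\Gamma^k_{ijl}$ on $V$ symmetric in $i,j$ whose symmetrization over the three covariant indices vanishes, with the standard tensorial action of $\mathrm{Gl}(V)$. (It corresponds to the space of first normal tensors $\Gamma^1_x$ of symmetric linear connections: in a normal chart $(\Gamma^1_x)^k_{ijl}=\partial_l\Gamma^k_{ij}(0)$.) $\mathrm{Diff}_x$ is the group of germs of diffeomorphisms fixing $x$, acting on connections by $(\tau\cdot\nabla)_D\bar D=\tau_*^{-1}(\nabla_{\tau_*D}\tau_*\bar D)$. *)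

(* Defs.v *)
From Stdlib Require Import Reals.
Open Scope R_scope.

(* V = R^2 with a fixed basis; indices range over a two-element type. *)
Inductive I2 : Type := e1 | e2.

Definition sum2 (f : I2 -> R) : R := f e1 + f e2.

(* Endomorphisms of V as 2x2 matrices: g k a = g^k_a. *)
Definition Mat := I2 -> I2 -> R.

Definition idm : Mat := fun i j => match i, j with
  | e1, e1 => 1 | e2, e2 => 1 | _, _ => 0 end.

Definition mmul (A B : Mat) : Mat := fun i j => sum2 (fun a => A i a * B a j).

Definition det2 (g : Mat) : R := g e1 e1 * g e2 e2 - g e1 e2 * g e2 e1.

(* inverse of a 2x2 matrix (meaningful when det2 g <> 0) *)
Definition inv2 (g : Mat) : Mat := fun i j =>
  match i, j with
  | e1, e1 => g e2 e2 / det2 g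
  | e1, e2 => - g e1 e2 / det2 g
  | e2, e1 => - g e2 e1 / det2 g
  | e2, e2 => g e1 e1 / det2 g
  end.

Definition in_GL (g : Mat) : Prop := det2 g <> 0.

(* (1,3)-tensors: T k i j l = T^k_{ijl} *)
Definition Tensor13 := I2 -> I2 -> I2 -> I2 -> R.

Definition in_Ctilde1 (T : Tensor13) : Prop :=
  (forall k i j l, T k i j l = T k j i l) /\
  (forall k i j l,
     T k i j l + T k i l j + T k j i l + T k j l i + T k l i j + T k l j i = 0).

Definition act (g : Mat) (T : Tensor13) : Tensor13 := fun k i j l =>
  sum2 (fun a => sum2 (fun b => sum2 (fun c => sum2 (fun d =>
    g k a * T a b c d * inv2 g b i * inv2 g c j * inv2 g d l)))).

Definition one_param_subgroup (phi : R -> Mat) : Prop :=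
  (forall t, in_GL (phi t)) /\
  (forall s t, phi (s + t) = mmul (phi s) (phi t)) /\
  (forall i j, continuity (fun t => phi t i j)).

(* A closed subgroup H of Gl(V) (given by its membership predicate) has
   dimension >= 1 iff its Lie algebra {A | exp(tA) in H for all t} is nonzero,
   i.e. iff H contains a nontrivial one-parameter subgroup. *)
Definition dim_ge1 (H : Mat -> Prop) : Prop :=
  exists phi : R -> Mat, one_param_subgroup phi /\
    (exists t i j, phi t i j <> idm i j) /\
    (forall t, H (phi t)).

Definition isotropy (T : Tensor13) : Mat -> Prop :=
  fun g => in_GL g /\ act g T = T.

(* Main.v *)
Require Import Defs.
From Stdlib Require Import Reals.
Open Scope R_scope.
From Stdlib Require Import Lra FunctionalExtensionality.

Definition Gm (a b c x y : R) : Mat := fun i j => match i, j with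
  | e1, e1 => x + y*a | e1, e2 => y*b | e2, e1 => y*c | e2, e2 => x - y*a end.

Definition adj2 (g : Mat) : Mat := fun i j =>
  match i, j with
  | e1, e1 => g e2 e2 | e1, e2 => - g e1 e2 | e2, e1 => - g e2 e1 | e2, e2 => g e1 e1 end.

Definition actadj (g : Mat) (T : Tensor13) : Tensor13 := fun k i j l =>
  sum2 (fun a => sum2 (fun b => sum2 (fun c => sum2 (fun d =>
    g k a * T a b c d * adj2 g b i * adj2 g c j * adj2 g d l)))).

Definition Tof (p0 q0 p1 q1 : R) : Tensor13 := fun k i j l =>
  let p := match k with e1 => p0 | e2 => p1 end in
  let q := match k with e1 => q0 | e2 => q1 end in
  match i, j, l with
  | e1, e1, e1 => 0 | e2, e2, e2 => 0
  | e2, e1, e1 => p | e1, e2, e1 => p | e1, e1, e2 => -2*p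
  | e1, e2, e2 => q | e2, e1, e2 => q | e2, e2, e1 => -2*q end.

Lemma key1 p0 q0 p1 q1 x y k i j l :
  actadj (Gm (p0+q1) (-2*q0) (2*p1) x y) (Tof p0 q0 p1 q1) k i j l =
  (x*x - ((p0+q1)*(p0+q1) + (-2*q0)*(2*p1))*y*y)^2 * Tof p0 q0 p1 q1 k i j l.
Proof.
  destruct k, i, j, l; unfold actadj, sum2, adj2, Gm, Tof; simpl; ring.
Qed.

Lemma key2 r x y k i j l :
  actadj (Gm 1 0 0 x y) (Tof r 0 0 (-r)) k i j l =
  (x*x - (1*1 + 0*0)*y*y)^2 * Tof r 0 0 (-r) k i j l.
Proof.
  destruct k, i, j, l; unfold actadj, sum2, adj2, Gm, Tof; simpl; ring.
Qed.

Lemma det_Gm a b c x y : det2 (Gm a b c x y) = x*x - (a*a+b*c)*y*y.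
Proof. unfold det2, Gm; ring. Qed.

Lemma act_eq_adj g T : det2 g = 1 -> act g T = actadj g T.
Proof.
  intro H. unfold act, actadj, inv2, adj2. rewrite H.
  apply functional_extensionality; intro k.
  apply functional_extensionality; intro i.
  apply functional_extensionality; intro j.
  apply functional_extensionality; intro l.
  destruct i, j, l; unfold Rdiv; rewrite Rinv_1; repeat rewrite Rmult_1_r; reflexivity.
Qed.

Lemma T_eq T : in_Ctilde1 T ->
  T = Tof (T e1 e2 e1 e1) (T e1 e1 e2 e2) (T e2 e2 e1 e1) (T e2 e1 e2 e2).
Proof.
  intros [Hs Hc].
  apply functional_extensionality; intro k.
  apply functional_extensionality; intro i.
  apply functional_extensionality; intro j.
  apply functional_extensionality; intro l.
  pose proof (Hs k e1 e2 e1). pose proof (Hs k e1 e2 e2).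
  pose proof (Hc k e1 e1 e1). pose proof (Hc k e2 e2 e2).
  pose proof (Hc k e1 e1 e2). pose proof (Hc k e2 e2 e1).
  destruct k, i, j, l; unfold Tof; simpl; lra.
Qed.

Lemma mmul_Gm a b c x1 y1 x2 y2 :
  mmul (Gm a b c x1 y1) (Gm a b c x2 y2) =
  Gm a b c (x1*x2 + (a*a+b*c)*y1*y2) (x1*y2 + y1*x2).
Proof.
  apply functional_extensionality; intro i.
  apply functional_extensionality; intro j.
  destruct i, j; unfold mmul, sum2, Gm; ring.
Qed.

Lemma nontriv a b c x y : (a <> 0 \/ b <> 0 \/ c <> 0) -> y <> 0 ->
  exists i j, Gm a b c x y i j <> idm i j.
Proof.
  intros Habc Hy.
  destruct (Req_dec b 0) as [Hb|Hb].
  2:{ exists e1, e2; simpl. intro H. apply Hb. apply (Rmult_eq_reg_l y); [lra|assumption]. }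
  destruct (Req_dec c 0) as [Hc|Hc].
  2:{ exists e2, e1; simpl. intro H. apply Hc. apply (Rmult_eq_reg_l y); [lra|assumption]. }
  assert (Ha : a <> 0) by lra.
  destruct (Req_dec (x + y*a) 1) as [H1|H1].
  - exists e2, e2; simpl. intro H. assert (y*a = 0) by lra.
    apply Rmult_integral in H0; lra.
  - exists e1, e1; simpl. assumption.
Qed.

Lemma cont_entries (cf sf : R -> R) a b c :
  continuity cf -> continuity sf ->
  forall i j, continuity (fun t => Gm a b c (cf t) (sf t) i j).
Proof.
  intros Hc Hs i j.
  assert (K : forall k, continuity (fun t => sf t * k)).
  { intro k. apply continuity_mult; [assumption | apply continuity_const; intros ? ?; reflexivity]. }
  destruct i, j; simpl.
  - apply continuity_plus; auto.
  - apply K.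
  - apply K.
  - apply continuity_minus; auto.
Qed.

Lemma gen (H : Mat -> Prop) a b c :
  (a <> 0 \/ b <> 0 \/ c <> 0) ->
  (forall x y, x*x - (a*a+b*c)*y*y = 1 -> H (Gm a b c x y)) ->
  dim_ge1 H.
Proof.
  intros Habc HH.
  set (d := a*a+b*c).
  assert (build : forall cf sf : R -> R,
    continuity cf -> continuity sf ->
    (forall t, cf t * cf t - d * sf t * sf t = 1) ->
    (forall s t, cf (s+t) = cf s * cf t + d * sf s * sf t) ->
    (forall s t, sf (s+t) = cf s * sf t + sf s * cf t) ->
    (exists t, sf t <> 0) -> dim_ge1 H).
  { intros cf sf Cc Cs Hrel Hc Hs [t0 Ht0].
    exists (fun t => Gm a b c (cf t) (sf t)). split; [split; [|split]|split].
    - intro t. unfold in_GL. rewrite det_Gm. fold d. rewrite Hrel. lra.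
    - intros s t. rewrite mmul_Gm. fold d. rewrite Hc, Hs. reflexivity.
    - apply cont_entries; assumption.
    - exists t0. apply nontriv; assumption.
    - intro t. apply HH. fold d. apply Hrel. }
  destruct (Rtotal_order d 0) as [Hn|[Hz|Hp]].
  - set (s := sqrt (- d)).
    assert (Hs0 : 0 < s) by (apply sqrt_lt_R0; lra).
    assert (Hss : s * s = - d) by (apply sqrt_sqrt; lra).
    apply (build (fun t => cos (s*t)) (fun t => sin (s*t) / s)).
    + apply derivable_continuous; reg.
    + apply derivable_continuous; reg. 
    + intro t. pose proof (sin2_cos2 (s*t)). unfold Rsqr in H0.
      replace d with (- (s*s)) by lra.
      replace (cos (s*t) * cos (s*t) - - (s * s) * (sin (s*t) / s) * (sin (s*t) / s))
        with (sin (s*t) * sin (s*t) + cos (s*t) * cos (s*t)) by (field; lra). lra.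
    + intros u v. rewrite Rmult_plus_distr_l, cos_plus. replace d with (- (s*s)) by lra. field. lra.
    + intros u v. rewrite Rmult_plus_distr_l, sin_plus. field. lra.
    + exists (PI / 2 / s). replace (s * (PI/2/s)) with (PI/2) by (field; lra).
      rewrite sin_PI2. apply Rinv_neq_0_compat in Hs0 || idtac. unfold Rdiv. rewrite Rmult_1_l.
      apply Rinv_neq_0_compat. lra.
  - apply (build (fun _ => 1) (fun t => t)).
    + apply continuity_const; intros ? ?; reflexivity.
    + apply derivable_continuous, derivable_id.
    + intro t. rewrite Hz. ring.
    + intros u v. rewrite Hz. ring.
    + intros u v. ring.
    + exists 1. lra.
  - set (s := sqrt d).
    assert (Hs0 : 0 < s) by (apply sqrt_lt_R0; lra).
    assert (Hss : s * s = d) by (apply sqrt_sqrt; lra).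
    apply (build (fun t => (exp (s*t) + exp (- (s*t))) / 2)
                 (fun t => (exp (s*t) - exp (- (s*t))) / (2*s))).
    + apply derivable_continuous; reg.
    + apply derivable_continuous; reg.
    + intro t. assert (E : exp (s*t) * exp (- (s*t)) = 1).
      { rewrite <- exp_plus. replace (s*t + - (s*t)) with 0 by ring. apply exp_0. }
      rewrite <- Hss.
      set (u := exp (s*t)) in *. set (v := exp (- (s*t))) in *.
      replace ((u + v) / 2 * ((u + v) / 2) - s * s * ((u - v) / (2 * s)) * ((u - v) / (2 * s)))
        with (u * v) by (field; lra). exact E.
    + intros u v. rewrite Rmult_plus_distr_l, Ropp_plus_distr, !exp_plus.
      rewrite <- Hss. field. lra.
    + intros u v. rewrite Rmult_plus_distr_l, Ropp_plus_distr, !exp_plus.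
      field. lra.
    + exists 1. rewrite Rmult_1_r. intro H0.
      assert (exp (- s) < exp s) by (apply exp_increasing; lra).
      unfold Rdiv in H0. apply Rmult_integral in H0. destruct H0 as [H0|H0]; [lra|].
      revert H0. apply Rinv_neq_0_compat. lra.
Qed.

Theorem mainTheorem12 (T : Tensor13) (HT : in_Ctilde1 T) :
  dim_ge1 (isotropy T).
Proof.
  rewrite (T_eq T HT).
  set (p0 := T e1 e2 e1 e1). set (q0 := T e1 e1 e2 e2).
  set (p1 := T e2 e2 e1 e1). set (q1 := T e2 e1 e2 e2).
  clearbody p0 q0 p1 q1.
  destruct (Req_dec (p0+q1) 0) as [Ha|Ha];
  [destruct (Req_dec (-2*q0) 0) as [Hb|Hb];
   [destruct (Req_dec (2*p1) 0) as [Hc|Hc] |] |].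
  -
    assert (E : Tof p0 q0 p1 q1 = Tof p0 0 0 (-p0)).
    { f_equal; lra. }
    rewrite E.
    apply (gen _ 1 0 0); [lra|].
    intros x y Hxy. split.
    + unfold in_GL. rewrite det_Gm. lra.
    + rewrite act_eq_adj by (rewrite det_Gm; lra).
      apply functional_extensionality; intro k.
      apply functional_extensionality; intro i.
      apply functional_extensionality; intro j.
      apply functional_extensionality; intro l.
      rewrite key2, Hxy. ring.
  - apply (gen _ (p0+q1) (-2*q0) (2*p1)); [tauto|].
    intros x y Hxy. split.
    + unfold in_GL. rewrite det_Gm. lra.
    + rewrite act_eq_adj by (rewrite det_Gm; lra).
      apply functional_extensionality; intro k.
      apply functional_extensionality; intro i.
      apply functional_extensionality; intro j.
      apply functional_extensionality; intro l.
      rewrite key1, Hxy. ring.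
  - apply (gen _ (p0+q1) (-2*q0) (2*p1)); [tauto|].
    intros x y Hxy. split.
    + unfold in_GL. rewrite det_Gm. lra.
    + rewrite act_eq_adj by (rewrite det_Gm; lra).
      apply functional_extensionality; intro k.
      apply functional_extensionality; intro i.
      apply functional_extensionality; intro j.
      apply functional_extensionality; intro l.
      rewrite key1, Hxy. ring.
  - apply (gen _ (p0+q1) (-2*q0) (2*p1)); [tauto|].
    intros x y Hxy. split.
    + unfold in_GL. rewrite det_Gm. lra.
    + rewrite act_eq_adj by (rewrite det_Gm; lra).
      apply functional_extensionality; intro k.
      apply functional_extensionality; intro i.
      apply functional_extensionality; intro j.
      apply functional_extensionality; intro l.
      rewrite key1, Hxy. ring.
Qed.
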